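(* Let $i$ be a positive integer. Then $\mathcal P_i(s)$ is a nonzero polynomial of degree at most $3i-3$, and $\mathcal Q_i(s)$ is a nonzero polynomial of degree $3i-2$.
   Context: Let $\mathbb F$ be a field of characteristic different from $3$ containing a primitive cube root of unity $\zeta_3$. For $i\in\mathbb Z$ define the rational functions in $\mathbb F(s)$ $$\mathcal P_i(s)=\frac{(s+\zeta_3)^{3i}-(s+\zeta_3^2)^{3i}}{3(\zeta_3-\zeta_3^2)s(s-1)},\qquad \mathcal Q_i(s)=\frac{\frac{1-\zeta_3}{3}(s+\zeta_3)^{3i-1}+\frac{1-\zeta_3^2}{3}(s+\zeta_3^2)^{3i-1}}{s-1}.$$ *)

(* Defs.v *)
From HB Require Import structures.
From mathcomp Require Import all_boot all_order all_algebra.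
Set Implicit Arguments. Unset Strict Implicit. Unset Printing Implicit Defensive.
Import Order.TTheory GRing.Theory Num.Theory.
Local Open Scope ring_scope.

(* Rational functions F(s) are modelled as {fraction {poly F}}; the variable s
   is the image of 'X. Integer powers use exprz (x ^ (k : int)). *)
Definition polyF (F : fieldType) (p : {poly F}) : {fraction {poly F}} :=
  tofrac p.

Definition calP (F : fieldType) (z : F) (i : int) : {fraction {poly F}} :=
  (polyF ('X + z%:P) ^ (3 * i) - polyF ('X + (z ^+ 2)%:P) ^ (3 * i))
  / polyF ((3 * (z - z ^+ 2))%:P * 'X * ('X - 1)).

Definition calQ (F : fieldType) (z : F) (i : int) : {fraction {poly F}} :=
  (polyF (((1 - z) / 3)%:P) * polyF ('X + z%:P) ^ (3 * i - 1)
   + polyF (((1 - z ^+ 2) / 3)%:P) * polyF ('X + (z ^+ 2)%:P) ^ (3 * i - 1))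
  / polyF ('X - 1).

(* Main.v *)
Require Import Defs.
From HB Require Import structures.
From mathcomp Require Import all_boot all_order all_algebra ring zify.
Import Order.TTheory GRing.Theory Num.Theory.
Local Open Scope ring_scope.

Lemma coefXaddCn (F : fieldType) (c : F) (n j : nat) :
  (n <= j)%N -> (('X + c%:P) ^+ n)`_j = (j == n)%:R.
Proof.
move=> hj.
have m : ('X + c%:P) ^+ n \is monic by apply: monic_exp; apply: monicXaddC.
have hs : size (('X + c%:P) ^+ n) = n.+1.
  have := size_exp ('X + c%:P) n; rewrite size_XaddC /= mul1n.
  have : ('X + c%:P) ^+ n != 0 by apply: monic_neq0.
  rewrite -size_poly_eq0; case: (size _) => // k _ /= ->.
  by [].
case: (eqVneq j n) => [hjn|hne]; first subst j; rewrite ?eqxx.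
  by have := monicP m; rewrite /lead_coef hs.
rewrite nth_default // hs; lia.
Qed.

Lemma size_eq_of (F : fieldType) (p : {poly F}) (m : nat) :
  (forall j, (m < j)%N -> p`_j = 0) -> p`_m != 0 -> size p = m.+1.
Proof.
move=> h1 h2.
have s1 : (size p <= m.+1)%N by apply/leq_sizeP => j hj; apply: h1.
have s2 : (m < size p)%N.
  rewrite ltnNge; apply/negP => H; move: h2; rewrite nth_default //.
  by rewrite eqxx.
lia.
Qed.

Theorem lemma3p3 (F : fieldType) (z : F)
  (hchar : (3%N \notin [pchar F])) (hz : 3.-primitive_root z)
  (i : nat) (hi : (0 < i)%N) :
  (exists p : {poly F},
     [/\ p != 0, ((size p).-1 <= 3 * i - 3)%N & calP z i%:Z = polyF p]) /\
  (exists q : {poly F},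
     [/\ q != 0, (size q).-1 = (3 * i - 2)%N & calQ z i%:Z = polyF q]).
Proof.
have h3 : (3 : F) != 0 by move: hchar; rewrite inE.
have z3 : z ^+ 3 = 1 by apply: prim_expr_order.
have z1 : z != 1.
  by have := eq_prim_root_expr hz 1 0; rewrite expr1 expr0 => ->.
have zz : z ^+ 2 != z.
  by have := eq_prim_root_expr hz 2 1; rewrite expr1 => ->.
have zq : z ^+ 2 + z + 1 = 0.
  have : (z - 1) * (z ^+ 2 + z + 1) = 0.
    have -> : (z - 1) * (z ^+ 2 + z + 1) = z ^+ 3 - 1 by ring.
    by rewrite z3 subrr.
  by move/eqP; rewrite mulf_eq0 subr_eq0 (negbTE z1) /= => /eqP.
have e1 : 1 + z = - z ^+ 2.
  apply/eqP; rewrite -subr_eq0.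
  have -> : 1 + z - - z ^+ 2 = z ^+ 2 + z + 1 by ring.
  by rewrite zq.
have e2 : 1 + z ^+ 2 = - z.
  apply/eqP; rewrite -subr_eq0.
  have -> : 1 + z ^+ 2 - - z = z ^+ 2 + z + 1 by ring.
  by rewrite zq.
have e1' : forall m, (1 + z) ^+ m = (- z ^+ 2) ^+ m by move=> m; rewrite e1.
have e2' : forall m, (1 + z ^+ 2) ^+ m = (- z) ^+ m by move=> m; rewrite e2.
have z3i : z ^+ (3 * i) = 1 by rewrite exprM z3 expr1n.
have z23i : (z ^+ 2) ^+ (3 * i) = 1 by rewrite -exprM mulnCA exprM z3 expr1n.
split.
- have [n nE] : exists n, n = (3 * i)%N by exists (3 * i)%N.
  rewrite -nE in z3i z23i.
  pose A : {poly F} := ('X + z%:P) ^+ n - ('X + (z ^+ 2)%:P) ^+ n.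
  have An0 : A != 0.
    apply/negP => /eqP A0.
    have : A.[- z] = 0 by rewrite A0 horner0.
    rewrite /A !hornerE addNr expr0n /= (_ : n == 0%N = false); last by rewrite nE; lia.
    rewrite mulr0n sub0r => /eqP; rewrite oppr_eq0 expf_eq0 => /andP [_].
    rewrite addrC subr_eq0 => /eqP => hh.
    by move: zz; rewrite hh eqxx.
  have r0 : root A 0.
    by rewrite /root /A !(hornerD, hornerN, hornerX, hornerC, horner_exp) !add0r z3i z23i subrr.
  have r1 : root A 1.
    by rewrite /root /A !(hornerD, hornerN, hornerX, hornerC, horner_exp) [X in _ - X]e2' [X in X - _]e1' [X in X - _]exprNn [X in _ - X]exprNn z3i z23i subrr.
  case/factor_theorem: r0 => q1 Aq1.
  have r1' : root q1 1.
    move: r1; rewrite /root Aq1 hornerM hornerXsubC subr0 mulr1.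
    by [].
  case/factor_theorem: r1' => q2 hq2.
  have Aq : A = q2 * ('X - 1%:P) * ('X - 0%:P) by rewrite Aq1 hq2.
  have q2n0 : q2 != 0.
    by apply/negP => /eqP q20; move: An0; rewrite Aq q20 !mul0r eqxx.
  pose c := 3 * (z - z ^+ 2).
  have cn0 : c != 0 by rewrite /c mulf_neq0 // subr_eq0 eq_sym.
  have sA : (size A <= n)%N.
    apply/leq_sizeP => j hj.
    by rewrite /A coefB !coefXaddCn // subrr.
  have sAq : size A = (size q2).+2.
    rewrite Aq size_Mmonic ?monicXsubC ?size_XsubC //; last first.
      by rewrite mulf_neq0 // polyXsubC_eq0.
    rewrite size_Mmonic ?monicXsubC ?size_XsubC //.
    by rewrite !addn2.
  exists ((c^-1)%:P * q2); split.
  + by rewrite mulf_neq0 // polyC_eq0 invr_eq0.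
  + rewrite size_Cmul ?invr_eq0 //.
    move: sA; rewrite sAq nE; case: (size q2) => [|k] /=; lia.
  + rewrite /calP /polyF.
    have ez : (3 * i%:Z) = (3 * i)%N :> int by rewrite PoszM.
    rewrite ez -!exprnP -nE -!tofracXn -tofracN -tofracD -/A Aq.
    have D0 : (3 * (z - z ^+ 2))%:P * 'X * ('X - 1) != 0 :> {poly F}.
      by rewrite -/c -polyC1 !mulf_neq0 ?polyC_eq0 ?polyXsubC_eq0 ?polyX_eq0.
    have -> : q2 * ('X - 1%:P) * ('X - 0%:P) =
        ((c^-1)%:P * q2) * ((3 * (z - z ^+ 2))%:P * 'X * ('X - 1)).
      rewrite -/c polyC0 subr0 -polyC1.
      have hc : (c^-1)%:P * c%:P = 1 :> {poly F} by rewrite -polyCM mulVf // polyC1.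
      transitivity (((c^-1)%:P * c%:P) * (q2 * ('X - 1%:P) * 'X)); last by ring.
      by rewrite hc mul1r.
    by rewrite tofracM mulfK // tofrac_eq0.
- have [m mE] : exists m, m = (3 * i - 1)%N by exists (3 * i - 1)%N.
  have zm : z ^+ m = z ^+ 2.
    rewrite mE (_ : (3 * i - 1 = 3 * (i - 1) + 2)%N); last by lia.
    by rewrite exprD exprM z3 expr1n mul1r.
  have z2m : (z ^+ 2) ^+ m = z.
    rewrite -exprM mE (_ : (2 * (3 * i - 1) = 3 * (2 * i - 1) + 1)%N); last by lia.
    by rewrite exprD exprM z3 expr1n mul1r expr1.
  pose c1 := (1 - z) / 3.
  pose c2 := (1 - z ^+ 2) / 3.
  pose B : {poly F} := c1%:P * ('X + z%:P) ^+ m + c2%:P * ('X + (z ^+ 2)%:P) ^+ m.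
  have c12 : c1 + c2 = 1.
    have -> : c1 + c2 = (3 - (z ^+ 2 + z + 1)) / 3 by rewrite /c1 /c2; ring.
    by rewrite zq subr0 divff.
  have cB : forall j, (m <= j)%N -> B`_j = (j == m)%:R.
    move=> j hj; rewrite /B coefD !coefCM !coefXaddCn //.
    by rewrite -mulrDl c12 mul1r.
  have sB : size B = m.+1.
    apply: size_eq_of => [j hj|]; first by rewrite cB ?(ltnW hj) // gtn_eqF.
    by rewrite cB // eqxx oner_neq0.
  have rB : root B 1.
    rewrite /root /B !(hornerD, hornerM, hornerX, hornerC, horner_exp).
    rewrite [X in _ * X + _]e1' [X in _ + _ * X]e2' [X in _ * X + _]exprNn [X in _ + _ * X]exprNn z2m zm.
    have -> : c1 * ((-1) ^+ m * z) + c2 * ((-1) ^+ m * z ^+ 2) =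
       (-1) ^+ m / 3 * z * (1 - z ^+ 3) * 1.
      rewrite /c1 /c2. ring.
    by rewrite z3 subrr mulr0 mul0r.
  case/factor_theorem: rB => q hq.
  have sq : size q = m.
    move: (sB); rewrite hq size_Mmonic ?monicXsubC ?size_XsubC //.
      by rewrite addn2 /=; case.
    by apply/negP => /eqP q0; move: sB; rewrite hq q0 mul0r size_poly0.
  exists q; split.
  + by rewrite -size_poly_eq0 sq mE; lia.
  + by rewrite sq mE; lia.
  + rewrite /calQ /polyF.
    have ez : (3 * i%:Z - 1) = (3 * i - 1)%N :> int.
      by rewrite -subzn ?PoszM //; lia.
    rewrite ez -!exprnP -mE -!tofracXn -!tofracM -tofracD -/c1 -/c2 -/B hq polyC1.
    by rewrite tofracM mulfK // tofrac_eq0 -polyC1 polyXsubC_eq0.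
Qed.
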